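(* Let $d,m\ge 1$ and let $\mathbf{G}\in\mathbb{R}^{dm\times dm}$ be a symmetric matrix satisfying: (P1) $\mathbf{G}$ is positive semidefinite; (P2) $\mathrm{rank}(\mathbf{G})\le d$; (P3) $\mathbf{G}_{ii}=\mathbf{I}$ for all $i\in\{1,\ldots,m\}$; (P4) $\mathbf{G}_{i,i+1}\in\mathbb{SO}(d)$ for all $i\in\{1,\ldots,m-1\}$. Then there exist $\mathbf{R}_1,\ldots,\mathbf{R}_m\in\mathbb{SO}(d)$ such that $\mathbf{G}_{ij}=\mathbf{R}_i^\top\mathbf{R}_j$ for all $i,j\in\{1,\ldots,m\}$.
   Context: $\mathbb{SO}(d)=\{\mathbf{R}\in\mathbb{R}^{d\times d}:\mathbf{R}^\top\mathbf{R}=\mathbf{I},\ \det\mathbf{R}=1\}$. For a matrix $\mathbf{X}\in\mathbb{R}^{dm\times dm}$, $\mathbf{X}_{ij}\in\mathbb{R}^{d\times d}$ denotes its $(i,j)$-th $d\times d$ block, i.e. $\mathbf{X}_{ij}(p,q)=\mathbf{X}((i-1)d+p,(j-1)d+q)$ for $p,q\in\{1,\ldots,d\}$. $\mathbf{I}$ is the $d\times d$ identity. *)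

(* Defs.v *)
From HB Require Import structures.
From mathcomp Require Import all_boot all_order all_algebra.
From mathcomp Require Import reals zify.
Set Implicit Arguments. Unset Strict Implicit. Unset Printing Implicit Defensive.
Import Order.TTheory GRing.Theory Num.Theory.
Local Open Scope ring_scope.

(* index (i-1)d + p  (0-based: i*d + p) of the big matrix *)
Lemma blk_idx_proof (d m : nat) (i : 'I_m) (p : 'I_d) : (i * d + p < d * m)%N.
Proof.
case: i => i /= Hi; case: p => p /= Hp.
have H : (i.+1 * d <= m * d)%N by rewrite leq_mul2r Hi orbT.
rewrite [(d * m)%N]mulnC; apply: leq_trans H.
rewrite mulSn; lia.
Qed.

Definition blk_idx (d m : nat) (i : 'I_m) (p : 'I_d) : 'I_(d * m) :=
  Ordinal (blk_idx_proof i p).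

Definition block {R : Type} (d m : nat) (X : 'M[R]_(d * m)) (i j : 'I_m)
  : 'M[R]_d := \matrix_(p < d, q < d) X (blk_idx i p) (blk_idx j q).

Definition is_psd {R : realType} (n : nat) (X : 'M[R]_n) : Prop :=
  forall x : 'cV[R]_n, 0 <= (x^T *m X *m x) 0 0.

Definition is_SO {R : realType} (d : nat) (Q : 'M[R]_d) : Prop :=
  Q^T *m Q = 1%:M /\ \det Q = 1.

(* Main.v *)
Require Import Defs.
From HB Require Import structures.
From mathcomp Require Import all_boot all_order all_algebra.
From mathcomp Require Import reals.
Import Order.TTheory GRing.Theory Num.Theory.
Local Open Scope ring_scope.

Theorem theorem1 (R : realType) (d m : nat) (G : 'M[R]_(d * m)) :
  (0 < d)%N -> (0 < m)%N ->
  G^T = G ->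
  is_psd G ->
  (\rank G <= d)%N ->
  (forall i : 'I_m, block G i i = 1%:M) ->
  (forall i j : 'I_m, val j = (val i).+1 -> is_SO (block G i j)) ->
  exists Rs : 'I_m -> 'M[R]_d,
    (forall i, is_SO (Rs i)) /\
    (forall i j : 'I_m, block G i j = (Rs i)^T *m Rs j).
Proof.
move=> Hd Hm HT _ Hrk Hdiag Hso.
pose i0 : 'I_m := Ordinal Hm.
pose f : 'I_d -> 'I_(d * m) := @blk_idx d m i0.
pose U : 'M[R]_(d, d * m) := rowsub f G.
have HU1 : colsub f U = 1%:M.
  rewrite -(Hdiag i0); apply/matrixP => p q; by rewrite !mxE.
have UG : (U <= G)%MS by apply: rowsub_sub.
have rU : \rank U = d.
  apply/eqP; rewrite eqn_leq rank_leq_row /=.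
  have := mxrankM_maxl U (colsub f 1%:M).
  by rewrite mulmx_colsub mulmx1 HU1 mxrank1.
have GU : (G <= U)%MS.
  have [_ <-] := mxrank_leqif_sup UG.
  by rewrite eqn_leq (mxrankS UG) rU Hrk.
have key : forall r, row r G = colsub f (row r G) *m U.
  move=> r.
  have rs : (row r G <= U)%MS := submx_trans (row_sub r G) GU.
  set x := row r G *m pinvmx U.
  have Ex : row r G = x *m U by rewrite /x mulmxKpV.
  have -> : colsub f (row r G) = x.
    by rewrite {1}Ex -mulmx_colsub HU1 mulmx1.
  exact: Ex.
have Hmul : forall j k, block G j k = block G j i0 *m block G i0 k.
  move=> j k; apply/matrixP => p q.
  have := congr1 (fun M : 'M[R]_(1, d * m) => M 0 (blk_idx k q)) (key (blk_idx j p)).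
  rewrite !mxE => ->; apply: eq_bigr => c _; by rewrite !mxE.
have Htr : forall j, block G j i0 = (block G i0 j)^T.
  move=> j; apply/matrixP => p q; by rewrite !mxE -{1}HT mxE.
pose Rs := fun j => block G i0 j.
have Hprod : forall i j, block G i j = (Rs i)^T *m Rs j.
  by move=> i j; rewrite Hmul Htr.
exists Rs; split; last exact: Hprod.
have Horth : forall j, (Rs j)^T *m Rs j = 1%:M.
  by move=> j; rewrite -Hprod Hdiag.
suff Hdet : forall (n : nat) (j : 'I_m), val j = n -> \det (Rs j) = 1.
  by move=> j; split; [exact: Horth | exact: (Hdet _ j erefl)].
elim=> [|n IH] j Hj.
  have -> : j = i0 by apply: val_inj.
  by rewrite /Rs Hdiag det1.
have Hn : (n < m)%N by apply: ltnW; rewrite -Hj ltn_ord.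
pose i := Ordinal Hn.
have [_ H1] := Hso i j Hj.
move: H1; rewrite Hprod det_mulmx det_tr (IH i erefl) mul1r.
by [].
Qed.
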